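(* Let $f:\Sigma\to\mathbb{L}^3$ be a minface, written near a regular point $p$ in local coordinates $(u,v)$ as $f(u,v)=\frac{\varphi(u)+\psi(v)}{2}$ with $\varphi(u)=\int_{u_0}^u(-1-g_1^2,1-g_1^2,2g_1)\hat\omega_1\,du$ and $\psi(v)=\int_{v_0}^v(1+g_2^2,1-g_2^2,-2g_2)\hat\omega_2\,dv$ (plus a constant), and let $p=(u_p,v_p)$. Then: (i) $p$ is an umbilic point of $f$ if and only if both null curves $\varphi$ and $\psi$ are degenerate at $p$ (i.e. $\varphi$ at $u_p$ and $\psi$ at $v_p$); (ii) $p$ is a quasi-umbilic point of $f$ if and only if exactly one of the two null curves $\varphi$, $\psi$ is degenerate at $p$.
   Context: $\mathbb{L}^3$ is $\mathbb{R}^3$ with the Lorentzian metric $-(dx^0)^2+(dx^1)^2+(dx^2)^2$. A smooth map $f:\Sigma\to\mathbb{L}^3$ from a connected oriented 2-manifold is a minface if around each point there are local coordinates $(u,v)$ on a domain $U$, smooth functions $g_1(u)$, $g_2(v)$ and nowhere-vanishing smooth functions $\hat\omega_1(u)$, $\hat\omega_2(v)$, with $g_1g_2\neq1$ on an open dense subset of $U$, such that $f=\frac{\varphi(u)+\psi(v)}{2}+\mathrm{const}$ with $\varphi,\psi$ as in the claim; $\varphi$ and $\psi$ are null curves (regular curves with lightlike velocity). Regular points are points where $f$ is an immersion; there $f$ is a timelike immersion with zero mean curvature. A null curve $\gamma$ is degenerate at $t$ if $\gamma'(t)\times\gamma''(t)=0$ (cross product) and non-degenerate otherwise. At a regular point,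 with spacelike unit normal $\nu$, the shape operator $S$ is given by $df(S(X))=-\overline\nabla_X\nu$; the point is umbilic if the second fundamental form is a scalar multiple of the first fundamental form there, and quasi-umbilic if $S$ is not diagonalizable over $\mathbb{C}$ there. *)

(* Defs.v *)
From HB Require Import structures.
From mathcomp Require Import all_boot all_order all_algebra.
From mathcomp Require Import all_classical all_reals all_analysis.
From mathcomp.real_closed Require Import complex.
Set Implicit Arguments. Unset Strict Implicit. Unset Printing Implicit Defensive.
Import Order.TTheory GRing.Theory Num.Theory numFieldNormedType.Exports.
Local Open Scope ring_scope.

Section Minface.
Variable R : realType.

Definition vec3 := 'rV[R]_3.

Definition lvec (a b c : R) : vec3 := \row_(i < 3) nth 0 [:: a; b; c] i.

Definition coord (x : vec3) (k : nat) : R := x ord0 (inord k).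

Definition ldot (x y : vec3) : R :=
  - coord x 0 * coord y 0 + coord x 1 * coord y 1 + coord x 2 * coord y 2.

(* Lorentzian cross product: ldot (lcross x y) z = det (x, y, z). *)
Definition lcross (x y : vec3) : vec3 :=
  lvec (- (coord x 1 * coord y 2 - coord x 2 * coord y 1))
       (coord x 2 * coord y 0 - coord x 0 * coord y 2)
       (coord x 0 * coord y 1 - coord x 1 * coord y 0).

Definition smooth_near (g : R -> R) (x : R) : Prop :=
  forall n : nat, \forall y \near x,
    derivable (iter n (fun h : R -> R => derive1 h) g) y 1.

Definition degenerate (gamma : R -> vec3) (t : R) : Prop :=
  lcross (derive1 gamma t) (derive1 (derive1 gamma) t) = 0.

Definition chart_f (phi psi : R -> vec3) (c : vec3) : R -> R -> vec3 :=
  fun u v => 2^-1 *: (phi u + psi v) + c.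

Definition pu (F : R -> R -> vec3) (u v : R) : vec3 := derive1 (fun s => F s v) u.
Definition pv (F : R -> R -> vec3) (u v : R) : vec3 := derive1 (fun t => F u t) v.

Definition dF (F : R -> R -> vec3) (u v : R) (i : 'I_2) : vec3 :=
  if val i == 0%N then pu F u v else pv F u v.

Definition regular_at (f : R -> R -> vec3) (u v : R) : Prop :=
  forall a b : R, a *: pu f u v + b *: pv f u v = 0 -> a = 0 /\ b = 0.

Definition unit_normal (f : R -> R -> vec3) : R -> R -> vec3 :=
  fun u v => let N := lcross (pu f u v) (pv f u v) in
             (Num.sqrt (ldot N N))^-1 *: N.

Definition first_ff (f : R -> R -> vec3) (u v : R) (i j : 'I_2) : R :=
  ldot (dF f u v i) (dF f u v j).

Definition second_ff (f : R -> R -> vec3) (u v : R) (i j : 'I_2) : R :=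
  - ldot (dF (unit_normal f) u v i) (dF f u v j).

Definition is_shape_operator (f : R -> R -> vec3) (u v : R) (S : 'M[R]_2) : Prop :=
  forall j : 'I_2, \sum_(i < 2) S i j *: dF f u v i = - dF (unit_normal f) u v j.

Definition umbilic (f : R -> R -> vec3) (u v : R) : Prop :=
  regular_at f u v /\
  exists lam : R, forall i j : 'I_2, second_ff f u v i j = lam * first_ff f u v i j.

Definition quasi_umbilic (f : R -> R -> vec3) (u v : R) : Prop :=
  regular_at f u v /\
  exists S : 'M[R]_2, is_shape_operator f u v S /\
    ~ diagonalizable (map_mx (fun x : R => (Complex x 0 : R[i])) S).

End Minface.

(* Main.v *)
Require Import Defs.
From HB Require Import structures.
From mathcomp Require Import all_boot all_order all_algebra.
From mathcomp Require Import all_classical all_reals all_analysis.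
From mathcomp.real_closed Require Import complex.
Import Order.TTheory GRing.Theory Num.Theory numFieldNormedType.Exports.
From mathcomp Require Import ring lra.
Local Open Scope ring_scope.



Section S.
Variable R : realType.
Implicit Types x y z : vec3 R.

Lemma coord_lvec0 (a b c : R) : Defs.coord (lvec a b c) 0 = a.
Proof. by rewrite /Defs.coord /lvec mxE inordK. Qed.
Lemma coord_lvec1 (a b c : R) : Defs.coord (lvec a b c) 1 = b.
Proof. by rewrite /Defs.coord /lvec mxE inordK. Qed.
Lemma coord_lvec2 (a b c : R) : Defs.coord (lvec a b c) 2 = c.
Proof. by rewrite /Defs.coord /lvec mxE inordK. Qed.
Lemma coordD x y k : Defs.coord (x + y) k = Defs.coord x k + Defs.coord y k.
Proof. by rewrite /Defs.coord mxE. Qed.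
Lemma coordN x k : Defs.coord (- x) k = - Defs.coord x k.
Proof. by rewrite /Defs.coord mxE. Qed.
Lemma coordB x y k : Defs.coord (x - y) k = Defs.coord x k - Defs.coord y k.
Proof. by rewrite coordD coordN. Qed.
Lemma coordZ (a : R) x k : Defs.coord (a *: x) k = a * Defs.coord x k.
Proof. by rewrite /Defs.coord mxE. Qed.
Lemma coord0 k : Defs.coord (0 : vec3 R) k = 0.
Proof. by rewrite /Defs.coord mxE. Qed.

Lemma vec3P x y : Defs.coord x 0 = Defs.coord y 0 -> Defs.coord x 1 = Defs.coord y 1 ->
  Defs.coord x 2 = Defs.coord y 2 -> x = y.
Proof.
move=> h0 h1 h2; apply/rowP => -[[|[|[|//]]] Hi].
- by move: h0; rewrite /Defs.coord (_ : inord 0 = Ordinal Hi) //; apply/val_inj; rewrite /= inordK.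
- by move: h1; rewrite /Defs.coord (_ : inord 1 = Ordinal Hi) //; apply/val_inj; rewrite /= inordK.
- by move: h2; rewrite /Defs.coord (_ : inord 2 = Ordinal Hi) //; apply/val_inj; rewrite /= inordK.
Qed.

Definition crE := (coord_lvec0, coord_lvec1, coord_lvec2, coordD, coordN, coordZ, coord0).

Lemma gram_id x y z : let G := ldot x x * ldot y y - ldot x y ^+ 2 in
  G *: z = (ldot y y * ldot z x - ldot x y * ldot z y) *: x
         + (ldot x x * ldot z y - ldot x y * ldot z x) *: y
         - ldot z (lcross x y) *: lcross x y.
Proof.
move=> G; apply: vec3P; rewrite /G /ldot /lcross !crE; ring.
Qed.

End S.
Section D.
Variable R : realType.
Local Notation crd := (@Defs.coord R).
Implicit Types x : R.
Definition crE' := (@coord_lvec0 R, @coord_lvec1 R, @coord_lvec2 R, @coordD R, @coordN R, @coordZ R, @coord0 R).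


Lemma is_derive_ext (f g : R -> R) x df :
  (forall s, f s = g s) -> is_derive x 1 f df -> is_derive x 1 g df.
Proof. by move=> fg; rewrite (_ : f = g) //; apply/funext. Qed.

Lemma is_derive_extv (f g : R -> vec3 R) x df :
  (forall s, f s = g s) -> is_derive x 1 f df -> is_derive x 1 g df.
Proof. by move=> fg; rewrite (_ : f = g) //; apply/funext. Qed.

Lemma dM (a b : R -> R) x da db : is_derive x 1 a da -> is_derive x 1 b db ->
  is_derive x 1 (fun s => a s * b s) (a x * db + b x * da).
Proof. by move=> ha hb; have := is_deriveM ha hb. Qed.

Lemma dD (a b : R -> R) x da db : is_derive x 1 a da -> is_derive x 1 b db ->
  is_derive x 1 (fun s => a s + b s) (da + db).
Proof. by move=> ha hb; have := is_deriveD ha hb. Qed.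

Lemma dB (a b : R -> R) x da db : is_derive x 1 a da -> is_derive x 1 b db ->
  is_derive x 1 (fun s => a s - b s) (da - db).
Proof. by move=> ha hb; have := is_deriveB ha hb. Qed.

Lemma dN (a : R -> R) x da : is_derive x 1 a da ->
  is_derive x 1 (fun s => - a s) (- da).
Proof. by move=> ha; have := is_deriveN ha. Qed.

Lemma dC (k : R) x : is_derive x 1 (fun _ : R => k) 0.
Proof. exact: is_derive_cst. Qed.

Arguments dM {a b x da db}.
Arguments dD {a b x da db}.
Arguments dB {a b x da db}.
Arguments dN {a x da}.
Lemma comp_der (F : R -> vec3 R) x D k : is_derive x 1 F D ->
  is_derive x 1 (fun s => crd (F s) k) (crd D k).
Proof.
case=> dF <-; split.
  exact: ((derivable_mxP F x 1).1 dF ord0 (inord k)).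
by rewrite (derive_mx dF) /Defs.coord mxE.
Qed.
Arguments comp_der {F x D} k _.

Lemma der_comp (F : R -> vec3 R) x D :
  is_derive x 1 (fun s => crd (F s) 0) (crd D 0) ->
  is_derive x 1 (fun s => crd (F s) 1) (crd D 1) ->
  is_derive x 1 (fun s => crd (F s) 2) (crd D 2) ->
  is_derive x 1 F D.
Proof.
move=> h0 h1 h2.
have hk : forall i : 'I_3, is_derive x 1 (fun s => F s ord0 i) (D ord0 i).
  move=> [[|[|[|//]]] Hi].
  - by rewrite (_ : Ordinal Hi = inord 0) //; apply/val_inj; rewrite /= inordK.
  - by rewrite (_ : Ordinal Hi = inord 1) //; apply/val_inj; rewrite /= inordK.
  - by rewrite (_ : Ordinal Hi = inord 2) //; apply/val_inj; rewrite /= inordK.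
have dF : derivable F x 1.
  apply/derivable_mxP => i j; rewrite (ord1 i); by case: (hk j).
split => //; rewrite (derive_mx dF); apply/matrixP => i j; rewrite mxE (ord1 i).
by case: (hk j).
Qed.

Lemma LV (a b c : R -> R) x da db dc : is_derive x 1 a da -> is_derive x 1 b db ->
  is_derive x 1 c dc ->
  is_derive x 1 (fun s => lvec (a s) (b s) (c s)) (lvec da db dc).
Proof.
move=> ha hb hc; apply: der_comp.
- by rewrite crE'; apply: is_derive_ext ha => s; rewrite !crE'.
- by rewrite crE'; apply: is_derive_ext hb => s; rewrite !crE'.
- by rewrite crE'; apply: is_derive_ext hc => s; rewrite !crE'.
Qed.

Arguments LV {a b c x da db dc}.
Lemma LD (F G : R -> vec3 R) x F' G' : is_derive x 1 F F' -> is_derive x 1 G G' ->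
  is_derive x 1 (fun s => ldot (F s) (G s)) (ldot F' (G x) + ldot (F x) G').
Proof.
move=> hF hG; rewrite /ldot.
have := dD (dD (dM (dN (comp_der 0 hF)) (comp_der 0 hG)) (dM (comp_der 1 hF) (comp_der 1 hG)))
   (dM (comp_der 2 hF) (comp_der 2 hG)).
move/is_derive_eq; apply; ring.
Qed.

Arguments LD {F G x F' G'}.
Lemma LC (F G : R -> vec3 R) x F' G' : is_derive x 1 F F' -> is_derive x 1 G G' ->
  is_derive x 1 (fun s => lcross (F s) (G s)) (lcross F' (G x) + lcross (F x) G').
Proof.
move=> hF hG; rewrite /lcross.
have := LV (dN (dB (dM (comp_der 1 hF) (comp_der 2 hG)) (dM (comp_der 2 hF) (comp_der 1 hG))))
  (dB (dM (comp_der 2 hF) (comp_der 0 hG)) (dM (comp_der 0 hF) (comp_der 2 hG)))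
  (dB (dM (comp_der 0 hF) (comp_der 1 hG)) (dM (comp_der 1 hF) (comp_der 0 hG))).
move/is_derive_eq; apply; apply: vec3P; rewrite !crE'; ring.
Qed.

Lemma is_derive_ext2 (f g : R -> R) x df dg :
  (forall s, f s = g s) -> df = dg -> is_derive x 1 f df -> is_derive x 1 g dg.
Proof. by move=> fg <-; apply: is_derive_ext. Qed.

Arguments LC {F G x F' G'}.
Lemma LZ (h : R -> R) (N : R -> vec3 R) x dh N' : is_derive x 1 h dh -> is_derive x 1 N N' ->
  is_derive x 1 (fun s => h s *: N s) (h x *: N' + dh *: N x).
Proof.
move=> hh hN; apply: der_comp.
- apply: is_derive_ext2 (dM hh (comp_der 0 hN)); first by move=> s; rewrite !crE'.
  by rewrite !crE'; ring.
- apply: is_derive_ext2 (dM hh (comp_der 1 hN)); first by move=> s; rewrite !crE'.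
  by rewrite !crE'; ring.
- apply: is_derive_ext2 (dM hh (comp_der 2 hN)); first by move=> s; rewrite !crE'.
  by rewrite !crE'; ring.
Qed.

Arguments LZ {h N x dh N'}.
Lemma LZc (k : R) (N : R -> vec3 R) x N' : is_derive x 1 N N' ->
  is_derive x 1 (fun s => k *: N s) (k *: N').
Proof.
move=> hN; have := LZ (dC k x) hN; move/is_derive_eq; apply.
by rewrite scale0r addr0.
Qed.

Lemma LK (f : R -> R) x df k : is_derive x 1 f df -> (\forall s \near x, f s = k) -> df = 0.
Proof.
move=> hf hk.
have h2 : is_derive x 1 (fun _ : R => k) df.
  apply: near_eq_is_derive hf; by apply: filterS hk.
by case: h2 => _ <-; rewrite derive_cst.
Qed.


Definition nrm (N : vec3 R) : vec3 R := (Num.sqrt (ldot N N))^-1 *: N.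

Lemma ldotC (a b : vec3 R) : ldot a b = ldot b a.
Proof. rewrite /ldot; ring. Qed.

Lemma ldotZZ (a b : R) (y z : vec3 R) : ldot (a *: y) (b *: z) = a * b * ldot y z.
Proof. rewrite /ldot !crE'; ring. Qed.

Lemma GN (N : R -> vec3 R) x N' : is_derive x 1 N N' -> 0 < ldot (N x) (N x) ->
  exists nu', is_derive x 1 (fun s => nrm (N s)) nu' /\ ldot nu' (nrm (N x)) = 0.
Proof.
move=> hN q0.
have hq := LD hN hN.
set q := fun s => ldot (N s) (N s) in hq.
have hs := @is_derive1_comp R Num.sqrt q x _ _ (@is_derive1_sqrt R (q x) q0) hq.
have sx : Num.sqrt (q x) != 0 by rewrite sqrtr_eq0 -ltNge.
have dv : derivable (fun y => ((Num.sqrt \o q) y)^-1) x 1.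
  by apply: derivableV => //; case: hs.
have hv := derivableP dv.
have hnu := LZ hv hN.
eexists.
split; first exact: hnu.
have h2 := LD hnu hnu.
have cq : {for x, continuous q}.
  by apply: differentiable_continuous; apply/derivable1_diffP; case: hq.
have nq : \forall t \near x, 0 < q t by apply: (@cvgr_gt R _ (nbhs x) _ q (q x) cq 0 q0).
have nq1 : \forall t \near x, ldot (nrm (N t)) (nrm (N t)) = 1.
  apply: filterS nq => t qt.
  rewrite /nrm ldotZZ -/(q t) -invfM -expr2 sqr_sqrtr ?mulVf //; first by rewrite gt_eqF.
  exact: ltW.
have H0 := @LK _ _ _ 1 h2 nq1.
move: H0; rewrite [X in _ + X = _]ldotC => /eqP.
by rewrite -mulr2n -mulr_natl mulf_eq0 pnatr_eq0 orFb => /eqP.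
Qed.




Section Alg.
Implicit Types a b y z : vec3 R.

Lemma lcrossZ (k l : R) y z : lcross (k *: y) (l *: z) = (k * l) *: lcross y z.
Proof. apply: vec3P; rewrite /lcross !crE'; ring. Qed.
Lemma ldotZl (k : R) y z : ldot (k *: y) z = k * ldot y z.
Proof. rewrite /ldot !crE'; ring. Qed.
Lemma ldotZr (k : R) y z : ldot y (k *: z) = k * ldot y z.
Proof. rewrite /ldot !crE'; ring. Qed.
Lemma ldot0r y : ldot y 0 = 0.
Proof. rewrite /ldot !crE'; ring. Qed.
Lemma ldot0l y : ldot 0 y = 0.
Proof. rewrite /ldot !crE'; ring. Qed.
Lemma trip y z a : ldot (lcross y z) a = - ldot (lcross y a) z.
Proof. rewrite /ldot /lcross !crE'; ring. Qed.
Lemma perp1 y z : ldot (lcross y z) y = 0.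
Proof. rewrite /ldot /lcross !crE'; ring. Qed.
Lemma perp2 y z : ldot (lcross y z) z = 0.
Proof. rewrite /ldot /lcross !crE'; ring. Qed.
Lemma LCC y z : ldot (lcross y z) (lcross y z) = ldot y z ^+ 2 - ldot y y * ldot z z.
Proof. rewrite /ldot /lcross !crE'; ring. Qed.
Lemma lcrossC y z : lcross z y = - lcross y z.
Proof. apply: vec3P; rewrite /lcross !crE'; ring. Qed.
Lemma lcross_self (k : R) y : lcross y (k *: y) = 0.
Proof. apply: vec3P; rewrite /lcross !crE'; ring. Qed.

Lemma span_b a b y : ldot a a = 0 -> ldot b b = 0 -> ldot a b != 0 ->
  ldot y b = 0 -> ldot y (lcross a b) = 0 -> y = (ldot y a / ldot a b) *: b.
Proof.
move=> haa hbb hab hyb hyn.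
have E := @gram_id R a b y; rewrite /= haa hbb hyb hyn in E.
have G0 : 0 * 0 - ldot a b ^+ 2 != 0.
  by rewrite mul0r sub0r oppr_eq0 expf_neq0.
rewrite -{1}[y](scalerK G0) E; apply: vec3P; rewrite !crE'; field; exact: hab.
Qed.

Lemma span_a a b y : ldot a a = 0 -> ldot b b = 0 -> ldot a b != 0 ->
  ldot y a = 0 -> ldot y (lcross a b) = 0 -> y = (ldot y b / ldot a b) *: a.
Proof.
move=> haa hbb hab hya hyn.
have E := @gram_id R a b y; rewrite /= haa hbb hya hyn in E.
have G0 : 0 * 0 - ldot a b ^+ 2 != 0.
  by rewrite mul0r sub0r oppr_eq0 expf_neq0.
rewrite -{1}[y](scalerK G0) E; apply: vec3P; rewrite !crE'; field; exact: hab.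
Qed.

Lemma DEG a b z : ldot a a = 0 -> ldot b b = 0 -> ldot a b != 0 -> ldot a z = 0 ->
  (lcross a z = 0 <-> ldot (lcross a b) z = 0).
Proof.
move=> haa hbb hab haz; split.
  by move=> h; rewrite trip h ldot0l oppr0.
move=> h.
have E := @gram_id R a b z; rewrite /= haa hbb [ldot z a]ldotC haz [ldot z (lcross a b)]ldotC h in E.
have G0 : 0 * 0 - ldot a b ^+ 2 != 0.
  by rewrite mul0r sub0r oppr_eq0 expf_neq0.
rewrite -{1}[z](scalerK G0) E.
have -> : (0 * 0 - ldot a b ^+ 2)^-1 *: ((0 * 0 - ldot a b * ldot z b) *: a + (0 * ldot z b - ldot a b * 0) *: b - 0 *: lcross a b)
   = ((0 * 0 - ldot a b ^+ 2)^-1 * (0 * 0 - ldot a b * ldot z b)) *: a.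
  by apply: vec3P; rewrite !crE'; ring.
exact: lcross_self.
Qed.
End Alg.


Arguments GN {N x N'}.
Lemma SIDE (F G : R -> vec3 R) x F' G' : is_derive x 1 F F' -> is_derive x 1 G G' ->
  0 < ldot (lcross (F x) (G x)) (lcross (F x) (G x)) ->
  exists nu', [/\ is_derive x 1 (fun s => nrm (lcross (F s) (G s))) nu',
     ldot nu' (nrm (lcross (F x) (G x))) = 0,
     ldot nu' (F x) = - ldot (nrm (lcross (F x) (G x))) F' &
     ldot nu' (G x) = - ldot (nrm (lcross (F x) (G x))) G'].
Proof.
move=> hF hG q0; have [nu' [hnu h0]] := GN (LC hF hG) q0.
exists nu'; split => //.
- have H := @LK _ _ _ 0 (LD hnu hF).
  have {}H : ldot nu' (F x) + ldot (nrm (lcross (F x) (G x))) F' = 0.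
    by apply: H; near=> s; rewrite /nrm ldotZl perp1 mulr0.
  by apply/eqP; rewrite -addr_eq0; apply/eqP.
- have H := @LK _ _ _ 0 (LD hnu hG).
  have {}H : ldot nu' (G x) + ldot (nrm (lcross (F x) (G x))) G' = 0.
    by apply: H; near=> s; rewrite /nrm ldotZl perp2 mulr0.
  by apply/eqP; rewrite -addr_eq0; apply/eqP.
Unshelve. all: by end_near.
Qed.

End D.



Section Diag.
Variable R : realType.
Local Notation C := (R[i]).
Definition i0 : 'I_2 := ord0.
Definition i1 : 'I_2 := ord_max.

Lemma ord2_cases (i : 'I_2) : i = i0 \/ i = i1.
Proof. by case: i => -[|[|//]] Hi; [left|right]; apply/val_inj. Qed.

Lemma mul22 (F : comRingType) (A B : 'M[F]_2) i j :
  (A *m B) i j = A i i0 * B i0 j + A i i1 * B i1 j.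
Proof.
rewrite mxE (bigD1 i0) // (bigD1 i1) //= big1 ?addr0 => // k /andP[k0 k1].
by case: (ord2_cases k) k0 k1 => ->; rewrite eqxx.
Qed.

Lemma mx22P (F : comRingType) (A B : 'M[F]_2) :
  A i0 i0 = B i0 i0 -> A i0 i1 = B i0 i1 -> A i1 i0 = B i1 i0 -> A i1 i1 = B i1 i1 -> A = B.
Proof.
move=> h00 h01 h10 h11; apply/matrixP => i j.
by case: (ord2_cases i) => ->; case: (ord2_cases j) => ->.
Qed.

Lemma cplx_eq0 (p : R) : (Complex p 0 : C) = 0 -> p = 0.
Proof. by case. Qed.

Definition mC (S : 'M[R]_2) : 'M[C]_2 := map_mx (fun x : R => (Complex x 0 : C)) S.

Lemma nondiag (M : 'M[C]_2) : M *m M = 0 -> M != 0 -> ~ diagonalizable M.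
Proof.
move=> MM Mn0 [P Pu] /similar_diagPp; rewrite conjumx // => Dd.
set D := P *m M *m invmx P in Dd.
have DD : D *m D = 0.
  rewrite /D !mulmxA mulmxKV // -[P *m M *m M](mulmxA) MM mulmx0 mul0mx //.
have D0 : D = 0.
  have hd : forall i, D i i = 0.
    move=> i; have := congr1 (fun X : 'M[C]_2 => X i i) DD; rewrite mul22 [X in _ = X]mxE.
    case: (ord2_cases i) => -> /=.
    - rewrite (Dd i0 i1) // mul0r addr0 => /eqP; rewrite mulf_eq0 orbb => /eqP //.
    - rewrite (Dd i1 i0) // mul0r add0r => /eqP; rewrite mulf_eq0 orbb => /eqP //.
  apply/matrixP => i j; rewrite [X in _ = X]mxE.
  case: (ord2_cases i) => ->; case: (ord2_cases j) => ->; by rewrite ?hd ?Dd.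
move/negP: Mn0; apply; apply/eqP.
have : invmx P *m D *m P = M by rewrite /D !mulmxA mulVmx // mul1mx mulmxKV.
by rewrite D0 mulmx0 mul0mx.
Qed.

Lemma diag0 (M : 'M[C]_2) : M = 0 -> diagonalizable M.
Proof. by move=> ->; exact: diagonalizable0. Qed.

Lemma diag2 (p q : C) (M : 'M[C]_2) : M i0 i0 = 0 -> M i1 i1 = 0 -> M i0 i1 = p -> M i1 i0 = q ->
  p != 0 -> q != 0 -> diagonalizable M.
Proof.
move=> m00 m11 m01 m10 p0 q0.
set mu := sqrtC (p * q).
have mu2 : mu ^+ 2 = p * q by rewrite sqrtCK.
have mu0 : mu != 0 by rewrite sqrtC_eq0 mulf_neq0.
pose P : 'M[C]_2 := \matrix_(i, j) if i == i0 then (if j == i0 then q else mu)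
                                   else (if j == i0 then q else - mu).
pose k := (- (2 * q * mu))^-1.
pose Q : 'M[C]_2 := \matrix_(i, j) if i == i0 then (if j == i0 then - mu * k else - mu * k)
                                   else (if j == i0 then - q * k else q * k).
have k0 : - (2 * q * mu) != 0 by rewrite oppr_eq0 !mulf_neq0 // pnatr_eq0.
have PQ : P *m Q = 1%:M.
  have k1 : 2 * q * mu != 0 by rewrite !mulf_neq0 // pnatr_eq0.
  by apply: mx22P; rewrite mul22 !mxE /=; rewrite /k; field; rewrite ?mu0 ?q0.
have Pu : P \in unitmx by case: (mulmx1_unit PQ).
exists P => //.
pose d : 'rV[C]_2 := \row_j if j == i0 then mu else - mu.
apply/similar_diagPex; exists d.
apply: similarW; first by rewrite row_free_unit.
by apply: mx22P; rewrite !mul22 !mxE /= ?m00 ?m11 ?m01 ?m10 /= ?(mulrC q p) -?mu2; ring.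
Qed.

Lemma mC_rc (S : 'M[R]_2) : map_mx (fun x : R => (Complex x 0 : C)) S = map_mx (real_complex R) S.
Proof. by []. Qed.

Lemma diag_real (S : 'M[R]_2) : S i0 i0 = 0 -> S i1 i1 = 0 ->
  (~ diagonalizable (map_mx (fun x : R => (Complex x 0 : C)) S)) <->
  ((S i0 i1 = 0 /\ S i1 i0 <> 0) \/ (S i0 i1 <> 0 /\ S i1 i0 = 0)).
Proof.
move=> s00 s11; rewrite mC_rc; split.
- move=> nd.
  have [p0|p0] := eqVneq (S i0 i1) 0; have [q0|q0] := eqVneq (S i1 i0) 0.
  + exfalso; apply: nd; apply: diag0; apply/matrixP => i j; rewrite !mxE.
    by case: (ord2_cases i) => ->; case: (ord2_cases j) => ->; rewrite ?s00 ?s11 ?p0 ?q0 rmorph0.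
  + by left; split => //; apply/eqP.
  + by right; split => //; apply/eqP.
  + exfalso; apply: nd; apply: (@diag2 (real_complex R (S i0 i1)) (real_complex R (S i1 i0))); rewrite ?mxE ?s00 ?s11 ?rmorph0 //.
    * by apply: contra p0 => /eqP H; apply/eqP; apply: cplx_eq0.
    * by apply: contra q0 => /eqP H; apply/eqP; apply: cplx_eq0.
- move=> H; apply: nondiag.
  + rewrite -map_mxM; apply/matrixP => i j; rewrite mxE mul22 [RHS]mxE -[RHS](rmorph0 (real_complex R)); congr (real_complex R _).
    case: H => -[e1 e2]; case: (ord2_cases i) => ->; case: (ord2_cases j) => ->;
      by rewrite ?s00 ?s11 ?e1 ?e2 ?mul0r ?mulr0 ?addr0.
  + apply/negP; rewrite -mC_rc => /eqP S0.
    have h01 : S i0 i1 = 0.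
      by apply: cplx_eq0; have := congr1 (fun X : 'M[C]_2 => X i0 i1) S0; rewrite !mxE.
    have h10 : S i1 i0 = 0.
      by apply: cplx_eq0; have := congr1 (fun X : 'M[C]_2 => X i1 i0) S0; rewrite !mxE.
    by case: H => -[].
Qed.
End Diag.



Arguments nrm {R}.
Arguments diag_real {R} S.
Arguments DEG {R a b z}.
Arguments span_a {R a b y}.
Arguments span_b {R a b y}.
Arguments dM {R a b x da db}.
Arguments dD {R a b x da db}.
Arguments dB {R a b x da db}.
Arguments dN {R a x da}.
Arguments dC {R} k x.
Arguments LV {R a b c x da db dc}.
Arguments LD {R F G x F' G'}.
Arguments LC {R F G x F' G'}.
Arguments LZ {R h N x dh N'}.
Arguments LZc {R} k {N x N'}.
Arguments GN {R N x N'}.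
Arguments SIDE {R F G x F' G'}.
Arguments LK {R f x df} k.
Arguments comp_der {R F x D} k.
Section Main.
Variable R : realType.
Local Notation crd := (@Defs.coord R).
Implicit Types x : R.

Lemma dX (a : R -> R) x da : is_derive x 1 a da ->
  is_derive x 1 (fun s => a s ^+ 2) ((2%:R * a x ^+ 1) *: da).
Proof. by move=> ha; have := is_deriveX 2 ha. Qed.
Arguments dX {a x da}.

Lemma sum2 (V : nmodType) (F : 'I_2 -> V) : \sum_(i < 2) F i = F i0 + F i1.
Proof.
rewrite (bigD1 i0) // (bigD1 i1) //= big1 ?addr0 => // k /andP[k0 k1].
by case: (ord2_cases k) k0 k1 => ->; rewrite eqxx.
Qed.

Lemma PU (phi psi : R -> vec3 R) (c : vec3 R) (s t : R) D : is_derive s 1 phi D ->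
  pu (chart_f phi psi c) s t = 2^-1 *: D.
Proof.
move=> h; rewrite /pu /chart_f derive1E; apply: derive_val.
have := is_deriveD (is_deriveZ (2^-1) (is_deriveD h (is_derive_cst (psi t) s 1))) (is_derive_cst c s 1).
by rewrite !addr0.
Qed.

Lemma PV (phi psi : R -> vec3 R) (c : vec3 R) (s t : R) D : is_derive t 1 psi D ->
  pv (chart_f phi psi c) s t = 2^-1 *: D.
Proof.
move=> h; rewrite /pv /chart_f derive1E; apply: derive_val.
have := is_deriveD (is_deriveZ (2^-1) (is_deriveD (is_derive_cst (phi s) t 1) h)) (is_derive_cst c t 1).
by rewrite add0r addr0.
Qed.


Lemma ldotNl (y z : vec3 R) : ldot (- y) z = - ldot y z.
Proof. rewrite /ldot !crE'; ring. Qed.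

Lemma sc_eq0 {k : R} {v : vec3 R} : k != 0 -> (k *: v = 0) = (v = 0).
Proof.
move=> k0; apply/propext; split => [/eqP|->]; last by rewrite scaler0.
by rewrite scaler_eq0 (negbTE k0) /= => /eqP.
Qed.

Lemma ml_eq0 {k x : R} : k != 0 -> (k * x = 0) = (x = 0).
Proof.
move=> k0; apply/propext; split => [/eqP|->]; last by rewrite mulr0.
by rewrite mulf_eq0 (negbTE k0) /= => /eqP.
Qed.

Lemma ldotDl (y z w : vec3 R) : ldot (y + z) w = ldot y w + ldot z w.
Proof. rewrite /ldot !crE'; ring. Qed.

Lemma COEF (a b Z : vec3 R) (p q : R) : ldot a a = 0 -> ldot b b = 0 ->
  p *: a + q *: b = - Z -> p * ldot a b = - ldot Z b /\ q * ldot a b = - ldot Z a.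
Proof.
move=> haa hbb E; split.
- have := congr1 (fun v => ldot v b) E; rewrite /= ldotDl !ldotZl hbb mulr0 addr0 => ->.
  rewrite /ldot !crE'; ring.
- have := congr1 (fun v => ldot v a) E; rewrite /= ldotDl !ldotZl haa mulr0 add0r => E'.
  rewrite [ldot a b]ldotC E' /ldot !crE'; ring.
Qed.
Arguments COEF {a b Z p q}.

Theorem main_thm (g1 g2 w1 w2 : R -> R)
  (phi psi : R -> vec3 R) (c : vec3 R) (up vp : R) :
  smooth_near g1 up -> smooth_near w1 up ->
  smooth_near g2 vp -> smooth_near w2 vp ->
  (\forall u \near up, w1 u != 0) ->
  (\forall v \near vp, w2 v != 0) ->
  (\forall u \near up, is_derive u (1 : R) phi
      (w1 u *: lvec (- 1 - g1 u ^+ 2) (1 - g1 u ^+ 2) (2 * g1 u))) ->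
  (\forall v \near vp, is_derive v (1 : R) psi
      (w2 v *: lvec (1 + g2 v ^+ 2) (1 - g2 v ^+ 2) (- 2 * g2 v))) ->
  regular_at (chart_f phi psi c) up vp ->
  (umbilic (chart_f phi psi c) up vp <-> degenerate phi up /\ degenerate psi vp) /\
  (quasi_umbilic (chart_f phi psi c) up vp <->
     (degenerate phi up /\ ~ degenerate psi vp) \/
     (~ degenerate phi up /\ degenerate psi vp)).
Proof.
move=> Hg1 Hw1 Hg2 Hw2 Hw1n Hw2n Hphi Hpsi Hreg.
have dg1 : derivable g1 up 1 by exact: (nbhs_singleton (Hg1 0%N)).
have dw1 : derivable w1 up 1 by exact: (nbhs_singleton (Hw1 0%N)).
have dg2 : derivable g2 vp 1 by exact: (nbhs_singleton (Hg2 0%N)).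
have dw2 : derivable w2 vp 1 by exact: (nbhs_singleton (Hw2 0%N)).
have w1n : w1 up != 0 := nbhs_singleton Hw1n.
have w2n : w2 vp != 0 := nbhs_singleton Hw2n.
pose Vp := fun s => w1 s *: lvec (- 1 - g1 s ^+ 2) (1 - g1 s ^+ 2) (2 * g1 s).
pose Vq := fun t => w2 t *: lvec (1 + g2 t ^+ 2) (1 - g2 t ^+ 2) (- 2 * g2 t).
have [A2 hVp] : exists A2, is_derive up 1 Vp A2.
  have hg := derivableP dg1; have hw := derivableP dw1.
  have H := LZ hw (LV (dB (dC (-1) _) (dX hg)) (dB (dC 1 _) (dX hg)) (dM (dC 2 _) hg)).
  by eexists; exact: H.
have [B2 hVq] : exists B2, is_derive vp 1 Vq B2.
  have hg := derivableP dg2; have hw := derivableP dw2.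
  eexists; exact: (LZ hw (LV (dD (dC 1 _) (dX hg)) (dB (dC 1 _) (dX hg)) (dM (dC (-2) _) hg))).
pose A := Vp up; pose B := Vq vp.
have nullVp : forall s, ldot (Vp s) (Vp s) = 0 by move=> s; rewrite /ldot !crE'; ring.
have nullVq : forall s, ldot (Vq s) (Vq s) = 0 by move=> s; rewrite /ldot !crE'; ring.
have AA2 : ldot A A2 = 0.
  have H := LK 0 (LD hVp hVp).
  have {}H : ldot A2 A + ldot A A2 = 0 by apply: H; near=> s; exact: nullVp.
  by move: H; rewrite ldotC -mulr2n -mulr_natl => /eqP; rewrite mulf_eq0 pnatr_eq0 orFb => /eqP.
have BB2 : ldot B B2 = 0.
  have H := LK 0 (LD hVq hVq).
  have {}H : ldot B2 B + ldot B B2 = 0 by apply: H; near=> s; exact: nullVq.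
  by move: H; rewrite ldotC -mulr2n -mulr_natl => /eqP; rewrite mulf_eq0 pnatr_eq0 orFb => /eqP.
have dphi_near : \forall s \near up, derive1 phi s = Vp s.
  by apply: filterS Hphi => s [_ h]; rewrite derive1E h.
have dpsi_near : \forall s \near vp, derive1 psi s = Vq s.
  by apply: filterS Hpsi => s [_ h]; rewrite derive1E h.
have dphi1 : derive1 phi up = A := nbhs_singleton dphi_near.
have dpsi1 : derive1 psi vp = B := nbhs_singleton dpsi_near.
have dphi2 : derive1 (derive1 phi) up = A2.
  by rewrite derive1E (near_eq_derive _ dphi_near); case: hVp.
have dpsi2 : derive1 (derive1 psi) vp = B2.
  by rewrite derive1E (near_eq_derive _ dpsi_near); case: hVq.
set f := chart_f phi psi c.
pose a := 2^-1 *: A; pose b := 2^-1 *: B.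
have Pup : forall t, pu f up t = a by move=> t; apply: PU; exact: (nbhs_singleton Hphi).
have Pvp : forall s, pv f s vp = b by move=> s; apply: PV; exact: (nbhs_singleton Hpsi).
have Pus : \forall s \near up, pu f s vp = 2^-1 *: Vp s.
  by apply: filterS Hphi => s h; apply: PU.
have Pvt : \forall t \near vp, pv f up t = 2^-1 *: Vq t.
  by apply: filterS Hpsi => t h; apply: PV.
have haa : ldot a a = 0 by rewrite /a ldotZl ldotZr nullVp !mulr0.
have hbb : ldot b b = 0 by rewrite /b ldotZl ldotZr nullVq !mulr0.
have hab : ldot a b != 0.
  apply/eqP => hab0.
  have E : ldot a b = 2^-1 * (w1 up * w2 vp) * (1 - g1 up * g2 vp) ^+ 2.
    by rewrite /a /b /A /B /Vp /Vq /ldot !crE'; field.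
  move: hab0; rewrite E => /eqP; rewrite !mulf_eq0 invr_eq0 pnatr_eq0 (negbTE w1n) (negbTE w2n) /=.
  rewrite orbb subr_eq0 => /eqP e.
  have g10 : g1 up != 0 by apply/eqP => g0; move: e; rewrite g0 mul0r => /eqP; rewrite oner_eq0.
  have g2E : g2 vp = (g1 up)^-1 by apply: (mulfI g10); rewrite -e mulfV.
  have [H _] : w2 vp = 0 /\ w1 up * g1 up ^+ 2 = 0.
    apply: Hreg; rewrite Pup Pvp.
    by rewrite /a /b /A /B /Vp /Vq; apply: vec3P; rewrite !crE' g2E; field.
  by move: w2n; rewrite H eqxx.
have pos : 0 < ldot (lcross a b) (lcross a b).
  by rewrite LCC haa hbb mulr0 subr0 lt_def sqrf_eq0 hab sqr_ge0.
pose n0 := nrm (lcross a b).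
have [nu_u [hnu hu0 hua hub]] := SIDE (LZc (2^-1) hVp) (is_derive_cst (2^-1 *: B) up 1) pos.
have [nu_v [hnv hv0 hva hvb]] := SIDE (is_derive_cst a vp 1) (LZc (2^-1) hVq) pos.
have dFf0 : dF f up vp i0 = a by rewrite /dF /= Pup.
have dFf1 : dF f up vp i1 = b by rewrite /dF /= Pvp.
have dFn0 : dF (unit_normal f) up vp i0 = nu_u.
  rewrite /dF /= /pu derive1E.
  have E : \forall s \near up, unit_normal f s vp = nrm (lcross (2^-1 *: Vp s) (cst (2^-1 *: B) s)).
    by apply: filterS Pus => s h; rewrite /unit_normal /= h Pvp.
  by rewrite (near_eq_derive _ E); case: hnu.
have dFn1 : dF (unit_normal f) up vp i1 = nu_v.
  rewrite /dF /= /pv derive1E.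
  have E : \forall t \near vp, unit_normal f up t = nrm (lcross (cst a t) (2^-1 *: Vq t)).
    by apply: filterS Pvt => t h; rewrite /unit_normal /= h Pup.
  by rewrite (near_eq_derive _ E); case: hnv.
have II00 : second_ff f up vp i0 i0 = ldot n0 (2^-1 *: A2).
  by rewrite /second_ff dFn0 dFf0 hua opprK.
have II11 : second_ff f up vp i1 i1 = ldot n0 (2^-1 *: B2).
  by rewrite /second_ff dFn1 dFf1 hvb opprK.
have II01 : second_ff f up vp i0 i1 = 0.
  by rewrite /second_ff dFn0 dFf1 hub ldot0r oppr0 oppr0.
have II10 : second_ff f up vp i1 i0 = 0.
  by rewrite /second_ff dFn1 dFf0 hva ldot0r oppr0 oppr0.
have I00 : first_ff f up vp i0 i0 = 0 by rewrite /first_ff dFf0.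
have I11 : first_ff f up vp i1 i1 = 0 by rewrite /first_ff dFf1.
have k0 : (Num.sqrt (ldot (lcross a b) (lcross a b)))^-1 != 0.
  by rewrite invr_eq0 sqrtr_eq0 -ltNge.
have h4 : (2^-1 * 2^-1 : R) != 0 by rewrite mulf_neq0 // invr_eq0 pnatr_eq0.
have KD1 : degenerate phi up <-> ldot n0 (2^-1 *: A2) = 0.
  rewrite /degenerate dphi1 dphi2 -(sc_eq0 h4) -lcrossZ -/a.
  rewrite (DEG haa hbb hab); last by rewrite ldotZl ldotZr AA2 !mulr0.
  by rewrite /n0 /nrm ldotZl ml_eq0.
have KD2 : degenerate psi vp <-> ldot n0 (2^-1 *: B2) = 0.
  rewrite /degenerate dpsi1 dpsi2 -(sc_eq0 h4) -lcrossZ -/b.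
  rewrite (DEG hbb haa); first last.
  - by rewrite ldotZl ldotZr BB2 !mulr0.
  - by rewrite ldotC.
  rewrite /n0 /nrm ldotZl ml_eq0 // lcrossC ldotNl.
  by split => [/eqP|->]; [rewrite oppr_eq0 => /eqP|rewrite oppr0].
have hub' : ldot nu_u b = 0 by move: hub; rewrite ldot0r oppr0 => h; exact: h.
have hva' : ldot nu_v a = 0 by move: hva; rewrite ldot0r oppr0 => h; exact: h.
have hua' : ldot nu_u a = - ldot n0 (2^-1 *: A2) by exact: hua.
have hvb' : ldot nu_v b = - ldot n0 (2^-1 *: B2) by exact: hvb.
have hu0' : ldot nu_u (lcross a b) = 0.
  by move: hu0; rewrite /n0 /nrm ldotZr ml_eq0.
have hv0' : ldot nu_v (lcross a b) = 0.
  by move: hv0; rewrite /n0 /nrm ldotZr ml_eq0.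
have divE : forall x : R, (x / ldot a b = 0) = (x = 0).
  by move=> x; rewrite mulrC ml_eq0 // invr_eq0.
split.
- split.
  + case=> _ [lam H]; split.
    * by apply/KD1; rewrite -II00 (H i0 i0) I00 mulr0.
    * by apply/KD2; rewrite -II11 (H i1 i1) I11 mulr0.
  + case=> /KD1 h1 /KD2 h2; split => //; exists 0 => i j; rewrite mul0r.
    by case: (ord2_cases i) => ->; case: (ord2_cases j) => ->; rewrite ?II00 ?II11 ?II01 ?II10.
- split.
  + case=> _ [S [HS nd]].
    have E0 := HS i0; have E1 := HS i1.
    rewrite sum2 dFf0 dFf1 dFn0 in E0; rewrite sum2 dFf0 dFf1 dFn1 in E1.
    have [c00 c10] := COEF haa hbb E0.
    have [c01 c11] := COEF haa hbb E1.
    have s00 : S i0 i0 = 0 by move: c00; rewrite hub' oppr0 mulrC ml_eq0.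
    have s11 : S i1 i1 = 0 by move: c11; rewrite hva' oppr0 mulrC ml_eq0.
    have e10 : (S i1 i0 = 0) = (degenerate phi up).
      apply/propext; rewrite KD1 -(ml_eq0 hab) mulrC c10 hua' opprK; done.
    have e01 : (S i0 i1 = 0) = (degenerate psi vp).
      apply/propext; rewrite KD2 -(ml_eq0 hab) mulrC c01 hvb' opprK; done.
    have := (diag_real S s00 s11).1 nd; rewrite e10 e01.
    case=> -[h1 h2]; [right; exact: (conj h2 h1) | left; exact: (conj h2 h1)].
  + move=> H; split => //.
    pose S : 'M[R]_2 := \matrix_(i, j) if (i == i1) && (j == i0) then ldot n0 (2^-1 *: A2) / ldot a b
       else if (i == i0) && (j == i1) then ldot n0 (2^-1 *: B2) / ldot a b else 0.
    exists S; split.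
    * move=> j; rewrite sum2 dFf0 dFf1 !mxE.
      case: (ord2_cases j) => ->; rewrite ?dFn0 ?dFn1 /=.
      - rewrite (span_b haa hbb hab hub' hu0') hua'.
        apply: vec3P; rewrite !crE'; ring.
      - rewrite (span_a haa hbb hab hva' hv0') hvb'.
        apply: vec3P; rewrite !crE'; ring.
    * apply/(diag_real S); rewrite ?mxE /= ?divE; [by []|by []|].
      rewrite -(propext KD1) -(propext KD2).
      case: H => -[h1 h2]; [right; exact: (conj h2 h1) | left; exact: (conj h2 h1)].
Unshelve. all: by end_near.
Qed.
End Main.

Theorem proposition3p1 (R : realType) (g1 g2 w1 w2 : R -> R)
  (phi psi : R -> vec3 R) (c : vec3 R) (up vp : R) :
  smooth_near g1 up -> smooth_near w1 up ->
  smooth_near g2 vp -> smooth_near w2 vp ->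
  (\forall u \near up, w1 u != 0) ->
  (\forall v \near vp, w2 v != 0) ->
  (\forall u \near up, is_derive u (1 : R) phi
      (w1 u *: lvec (- 1 - g1 u ^+ 2) (1 - g1 u ^+ 2) (2 * g1 u))) ->
  (\forall v \near vp, is_derive v (1 : R) psi
      (w2 v *: lvec (1 + g2 v ^+ 2) (1 - g2 v ^+ 2) (- 2 * g2 v))) ->
  regular_at (chart_f phi psi c) up vp ->
  (umbilic (chart_f phi psi c) up vp <-> degenerate phi up /\ degenerate psi vp) /\
  (quasi_umbilic (chart_f phi psi c) up vp <->
     (degenerate phi up /\ ~ degenerate psi vp) \/
     (~ degenerate phi up /\ degenerate psi vp)).
Proof. exact: main_thm. Qed.
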